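(* Let $\alpha,\beta>0$, let $g(n)=\sum_{i=0}^kc_in^i$ with $k\ge0$ and $c_k\ne0$, let $x$ satisfy $x(n)=\alpha\,x(\lfloor n/2\rfloor)+\beta\,x(\lceil n/2\rceil)+g(n)$ for $n\ge2$ with given $x(1)$, set $x(0)\coloneqq0$, $h(n)\coloneqq x(n+1)-x(n)$, $d_0\coloneqq(1-\beta)x(1)-g(1)+g(0)$, $d_1\coloneqq g(1)-(1-\beta)x(1)$. For $0\le i,j<k$ put \[b_{0j}=\sum_{i=j+1}^k\binom ij2^jc_i,\quad b_{1j}=\sum_{i=j+1}^k\binom ij(2^i-2^j)c_i,\quad a_{0ij}=[j=i]2^i,\quad a_{1ij}=\binom ij2^j,\] and for $r\in\{0,1\}$ let $b_r=(b_{r(k-1)},\dots,b_{r0})$ (a row vector), $\widetilde A_r=(a_{rij})_{i=k-1,\dots,0;\ j=k-1,\dots,0}$ (a $k\times k$ matrix with rows and columns indexed in decreasing order), $\mu_0=\beta$, $\mu_1=\alpha$, and \[A_r=\begin{pmatrix}\mu_r&b_r&d_r\\0&\widetilde A_r&0\\0&0&[r=0]\end{pmatrix}\in\mathbb{C}^{(k+2)\times(k+2)}.\] Let $u=(1,0,\dots,0)\in\mathbb{C}^{1\times(k+2)}$ and $w=(x(1),0,\dots,0,1,1)^\top$ if $k\ge1$, $w=(x(1),1)^\top$ if $k=0$. Then $(u,(A_0,A_1),w)$ is a linear representation of the $2$-regular sequence $h$, with associated right vector-valued sequence $n\mapsto(h(n),n^{k-1},\dots,n,1,\delta_0(n))^\top$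 where $\delta_0(n)=[n=0]$. If moreover $d_0=d_1=0$, then removing the last column of $u$, the last row and column of $A_0$ and $A_1$, and the last row of $w$ also yields a linear representation of $h$.
   Context: A sequence $x\in\mathbb{C}^{\mathbb{N}_0}$ is $q$-regular if there are $D\ge0$, $D\times D$ complex matrices $A_0,\dots,A_{q-1}$, $u\in\mathbb{C}^{1\times D}$ and $v\in(\mathbb{C}^{D\times1})^{\mathbb{N}_0}$ with $x(n)=uv(n)$ and $v(qn+r)=A_rv(n)$ for all $0\le r<q$, $n\ge0$; $(u,A,v(0))$ is a linear representation and $v$ the associated right vector-valued sequence. Iverson's bracket: $[S]=1$ if $S$ is true and $0$ otherwise; $\binom ij=0$ for $j>i$. *)

(* Defs.v *)
(* The scalar field is an arbitrary numeric closed field C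
   (e.g. algC or R[i]); the paper's C^{N_0} is the instance C = complex numbers. *)
From HB Require Import structures.
From mathcomp Require Import all_boot all_order all_algebra.
Set Implicit Arguments. Unset Strict Implicit. Unset Printing Implicit Defensive.
Import Order.TTheory GRing.Theory Num.Theory.
Local Open Scope ring_scope.

Section Defs.
Variable C : numClosedFieldType.

Definition rvs_rec (q D : nat) (A : 'I_q -> 'M[C]_D) (v : nat -> 'cV[C]_D) :=
  forall (r : 'I_q) (n : nat), v (q * n + r)%N = A r *m v n.

Definition linrep_with (q D : nat) (u : 'rV[C]_D) (A : 'I_q -> 'M[C]_D)
  (v : nat -> 'cV[C]_D) (s : nat -> C) :=
  rvs_rec A v /\ forall n, s n = (u *m v n) 0 0.

Definition linear_rep (q D : nat) (u : 'rV[C]_D) (A : 'I_q -> 'M[C]_D)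
  (w : 'cV[C]_D) (s : nat -> C) :=
  exists v : nat -> 'cV[C]_D, v 0%N = w /\ linrep_with u A v s.

Definition gpoly (k : nat) (c : nat -> C) (n : nat) : C :=
  \sum_(i < k.+1) c i * (n%:R) ^+ i.

Definition hseq (x : nat -> C) (n : nat) : C := x n.+1 - x n.

Definition d0 (beta : C) (k : nat) (c : nat -> C) (x1 : C) : C :=
  (1 - beta) * x1 - gpoly k c 1 + gpoly k c 0.
Definition d1 (beta : C) (k : nat) (c : nat -> C) (x1 : C) : C :=
  gpoly k c 1 - (1 - beta) * x1.

Definition bcoef (r : nat) (k : nat) (c : nat -> C) (j : nat) : C :=
  if r == 0%N then
    \sum_(j.+1 <= i < k.+1) ('C(i, j))%:R * 2%:R ^+ j * c i
  else
    \sum_(j.+1 <= i < k.+1) ('C(i, j))%:R * (2%:R ^+ i - 2%:R ^+ j) * c i.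

Definition acoef (r : nat) (i j : nat) : C :=
  if r == 0%N then (j == i)%:R * 2%:R ^+ i
  else ('C(i, j))%:R * 2%:R ^+ j.

Definition dcoef (r : nat) (alpha beta : C) (k : nat) (c : nat -> C) (x1 : C) : C :=
  if r == 0%N then d0 beta k c x1 else d1 beta k c x1.

Definition mu (r : nat) (alpha beta : C) : C := if r == 0%N then beta else alpha.

(* Index convention for the (k+2)-dimensional vectors/matrices:
   position 0 <-> first component (h(n));
   position p with 1 <= p <= k <-> the component n^(k-p)
     (so the tilde-A block has rows/columns i = k-1,...,0 in decreasing order);
   position k+1 <-> last component (delta_0(n)). *)
Definition repA (alpha beta : C) (k : nat) (c : nat -> C) (x1 : C) (r : 'I_2)
  : 'M[C]_(k.+2) :=
  \matrix_(p, q) (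
    if p == 0%N :> nat then
      (if q == 0%N :> nat then mu r alpha beta
       else if (q <= k)%N then bcoef r k c (k - q)
       else dcoef r alpha beta k c x1)
    else if (p <= k)%N then
      (if (1 <= q <= k)%N then acoef r (k - p) (k - q) else 0)
    else
      (if q == k.+1 :> nat then (r == 0%N :> nat)%:R else 0)).

Definition repu (k : nat) : 'rV[C]_(k.+2) := \row_q (q == 0%N :> nat)%:R.

Definition repw (k : nat) (x1 : C) : 'cV[C]_(k.+2) :=
  \col_p (if p == 0%N :> nat then x1
          else if (p == k :> nat) || (p == k.+1 :> nat) then 1 else 0).

Definition repv (k : nat) (x : nat -> C) (n : nat) : 'cV[C]_(k.+2) :=
  \col_p (if p == 0%N :> nat then hseq x n
          else if (p <= k)%N then (n%:R : C) ^+ (k - p)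
          else (n == 0%N)%:R).

Definition drop_last_col (m n : nat) (M : 'M[C]_(m, n.+1)) : 'M[C]_(m, n) :=
  colsub (widen_ord (leqnSn n)) M.
Definition drop_last_row (m n : nat) (M : 'M[C]_(m.+1, n)) : 'M[C]_(m, n) :=
  rowsub (widen_ord (leqnSn m)) M.
Definition drop_last_rc (n : nat) (M : 'M[C]_(n.+1)) : 'M[C]_n :=
  mxsub (widen_ord (leqnSn n)) (widen_ord (leqnSn n)) M.

End Defs.

(* Main.v *)
Require Import Defs.
From HB Require Import structures.
From mathcomp Require Import all_boot all_order all_algebra.
From mathcomp Require Import zify ring.
Import Order.TTheory GRing.Theory Num.Theory.
Local Open Scope ring_scope.

Section Aux.
Variable C : numClosedFieldType.
Variables (k : nat) (c : nat -> C).

Lemma exch (G : nat -> nat -> C) (y : C) :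
  \sum_(i < k.+1) c i * \sum_(j < k) (if (j < i)%N then G i j * y ^+ j else 0)
  = \sum_(j < k) (\sum_(j.+1 <= i < k.+1) G i j * c i) * y ^+ j.
Proof.
transitivity (\sum_(i < k.+1) \sum_(j < k)
   (if (j < i)%N then G i j * c i * y ^+ j else 0)).
  apply: eq_bigr => i _; rewrite mulr_sumr; apply: eq_bigr => j _.
  by case: ifP => _; [ring | rewrite mulr0].
rewrite exchange_big; apply: eq_bigr => j _ /=.
rewrite big_geq_mkord mulr_suml big_mkcond /=.
by rewrite [RHS]big_mkcond.
Qed.

Lemma widen_sum (i : nat) (F : nat -> C) : (i <= k)%N ->
  \sum_(j < i) F j = \sum_(j < k) (if (j < i)%N then F j else 0).
Proof. by move=> H; rewrite (big_ord_widen k F H) big_mkcond. Qed.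

Lemma gdiff0 (n : nat) :
  gpoly k c (2 * n + 1) - gpoly k c (2 * n) =
  \sum_(j < k) bcoef 0 k c j * (n%:R) ^+ j.
Proof.
rewrite /gpoly /bcoef /= -sumrB.
rewrite -(exch (fun i j => ('C(i, j))%:R * 2%:R ^+ j)).
apply: eq_bigr => i _; rewrite -mulrBr; congr (_ * _).
rewrite natrD natrM exprD1n big_ord_recr /= binn mulr1n addrK.
rewrite (widen_sum _ (fun j => (2%:R * n%:R) ^+ j *+ 'C(i, j))); last first.
  by rewrite -ltnS.
apply: eq_bigr => j _; case: ifP => // _.
by rewrite -mulr_natl exprMn mulrA.
Qed.

Lemma gdiff1 (n : nat) :
  gpoly k c (2 * n + 2) - gpoly k c (2 * n + 1) =
  \sum_(j < k) bcoef 1 k c j * (n%:R) ^+ j.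
Proof.
rewrite /gpoly /bcoef /= -sumrB.
rewrite -(exch (fun i j => ('C(i, j))%:R * (2%:R ^+ i - 2%:R ^+ j))).
apply: eq_bigr => i _; rewrite -mulrBr; congr (_ * _).
have -> : ((2 * n + 2)%:R : C) = 2%:R * (n%:R + 1).
  by rewrite natrD natrM mulrDr mulr1.
rewrite natrD natrM exprMn (exprD1n (n%:R : C)) (exprD1n (2%:R * n%:R : C)) mulr_sumr -sumrB big_ord_recr /= binn.
rewrite !mulr1n -exprMn subrr addr0.
rewrite (widen_sum _ (fun j => 2%:R ^+ i * ((n%:R:C) ^+ j *+ 'C(i, j))
   - (2%:R * n%:R) ^+ j *+ 'C(i, j))); last by rewrite -ltnS.
apply: eq_bigr => j _; case: ifP => // _.
rewrite -[_ ^+ j *+ _]mulr_natl -[(_ * _) ^+ j *+ _]mulr_natl exprMn. move: ('C(i, j))%:R (n%:R : C) (2 : C) => b z t. ring.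
Qed.
End Aux.

Section Main.
Variable C : numClosedFieldType.
Variables (alpha beta : C) (k : nat) (c : nat -> C) (x : nat -> C).
Hypothesis x0 : x 0%N = 0.
Hypothesis Hx : forall n : nat, (2 <= n)%N ->
     x n = alpha * x (n %/ 2)%N + beta * x (n.+1 %/ 2)%N + gpoly k c n.

Let x1 := x 1%N.

Lemma xodd m : (0 < m)%N -> x (2 * m + 1)%N = alpha * x m + beta * x m.+1 + gpoly k c (2 * m + 1).
Proof.
move=> Hm; rewrite Hx; last lia.
have -> : ((2 * m + 1) %/ 2 = m)%N by lia.
by have -> : ((2 * m + 1).+1 %/ 2 = m.+1)%N by lia.
Qed.

Lemma xeven m : (0 < m)%N -> x (2 * m)%N = alpha * x m + beta * x m + gpoly k c (2 * m).
Proof.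
move=> Hm; rewrite Hx; last lia.
have -> : ((2 * m) %/ 2 = m)%N by lia.
by have -> : ((2 * m).+1 %/ 2 = m)%N by lia.
Qed.

Lemma xeven2 m : x (2 * m + 2)%N = alpha * x m.+1 + beta * x m.+1 + gpoly k c (2 * m + 2).
Proof.
rewrite Hx; last lia.
have -> : ((2 * m + 2) %/ 2 = m.+1)%N by lia.
by have -> : ((2 * m + 2).+1 %/ 2 = m.+1)%N by lia.
Qed.

Lemma hrec0 n : hseq x (2 * n) = beta * hseq x n
  + (gpoly k c (2 * n + 1) - gpoly k c (2 * n)) + d0 beta k c x1 * (n == 0)%N%:R.
Proof.
rewrite /hseq /d0 /x1; case: n => [|m].
  rewrite muln0 add0n x0 /=; move: (gpoly k c 1) (gpoly k c 0) => a b; ring.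
have -> : (2 * m.+1).+1 = (2 * m.+1 + 1)%N by lia.
rewrite xodd // xeven // /=.
move: (gpoly k c (2 * m.+1 + 1)) (gpoly k c (2 * m.+1)) => a b; ring.
Qed.

Lemma hrec1 n : hseq x (2 * n + 1) = alpha * hseq x n
  + (gpoly k c (2 * n + 2) - gpoly k c (2 * n + 1)) + d1 beta k c x1 * (n == 0)%N%:R.
Proof.
rewrite /hseq /d1 /x1; case: n => [|m].
  have -> : (2 * 0 + 1).+1 = (2 * 0 + 2)%N by [].
  rewrite xeven2 muln0 add0n x0 /=.
  move: (gpoly k c 1) (gpoly k c 2) => a b; ring.
have -> : (2 * m.+1 + 1).+1 = (2 * m.+1 + 2)%N by lia.
rewrite xodd // xeven2 /=.
move: (gpoly k c (2 * m.+1 + 1)) (gpoly k c (2 * m.+1 + 2)) => a b; ring.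
Qed.


Definition Aent (r p q : nat) : C :=
    if p == 0%N then
      (if q == 0%N then mu r alpha beta
       else if (q <= k)%N then bcoef r k c (k - q)
       else dcoef r alpha beta k c (x 1%N))
    else if (p <= k)%N then
      (if (1 <= q <= k)%N then acoef C r (k - p) (k - q) else 0)
    else
      (if q == k.+1 then (r == 0%N)%:R else 0).

Definition vent (n p : nat) : C :=
  if p == 0%N then hseq x n
  else if (p <= k)%N then (n%:R : C) ^+ (k - p)
  else (n == 0%N)%:R.

Lemma acoef0 (m : nat) (z : C) : (m < k)%N ->
  \sum_(0 <= i < k) acoef C 0 m i * z ^+ i = (2 * z) ^+ m.
Proof.
move=> Hm; rewrite big_mkord (bigD1 (Ordinal Hm)) //= /acoef /= eqxx mul1r.
rewrite big1 ?addr0 ?exprMn // => i Hi.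
rewrite (_ : (i == m :> nat) = false) ?mul0r //; apply/negbTE.
by apply: contra Hi => /eqP Him; apply/eqP/val_inj.
Qed.

Lemma acoef1 (m : nat) (z : C) : (m < k)%N ->
  \sum_(0 <= i < k) acoef C 1 m i * z ^+ i = (2 * z + 1) ^+ m.
Proof.
move=> Hm; rewrite big_mkord (exprD1n (2 * z)) (big_ord_widen k (fun i => (2 * z) ^+ i *+ 'C(m, i)) Hm) [RHS]big_mkcond.
apply: eq_bigr => i _; rewrite /acoef /=.
case: ltnP => H.
  by rewrite -[_ ^+ i *+ _]mulr_natl exprMn mulrA.
by rewrite bin_small // !mul0r.
Qed.

Lemma rowlem (r n p : nat) : (r < 2)%N -> (p < k.+2)%N ->
  \sum_(0 <= q < k.+2) Aent r p q * vent n q = vent (2 * n + r) p.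
Proof.
move=> Hr Hp.
rewrite big_nat_recr // big_nat_recl //.
have Hmid : \sum_(0 <= i < k) Aent r p i.+1 * vent n i.+1 =
  \sum_(0 <= i < k) ((if p == 0%N then bcoef r k c i
     else if (p <= k)%N then acoef C r (k - p) i else 0) * (n%:R : C) ^+ i).
  rewrite big_nat_rev; apply: eq_big_nat => i /andP[_ Hi].
  have -> : (0 + k - i.+1).+1 = (k - i)%N by lia.
  rewrite /Aent /vent.
  rewrite (_ : (k - i == 0)%N = false); last lia.
  rewrite (_ : (k - i <= k)%N = true); last lia.
  rewrite (_ : (0 < k - i)%N = true); last lia.
  rewrite (_ : (k - i == k.+1)%N = false); last lia.
  rewrite (_ : (k - (k - i) = i)%N); last lia.
  by [].
rewrite Hmid; clear Hmid.
have E1 : (k.+1 == 0%N) = false by [].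
have E2 : (k.+1 <= k)%N = false by rewrite ltnn.
case: (ltnP k p) => Hpk.
  have Ep : p = k.+1 by lia.
  subst p; rewrite /Aent /vent E1 E2 eqxx /=.
  rewrite big1_seq ?mul0r ?add0r; last by move=> i _; rewrite mul0r.
  rewrite eqxx; case: r Hr => [|[|//]] _.
    by rewrite mul1r addn0 muln_eq0.
  by rewrite mul0r addn1.
case: (posnP p) => Hp0.
  subst p; rewrite /Aent /vent /= ?E1 ?E2 /=.
  rewrite big_mkord.
  case: r Hr => [|[|//]] _ /=.
    rewrite -gdiff0 addn0 hrec0 /x1 /mu /dcoef /=; ring.
  rewrite -gdiff1 hrec1 /x1 /mu /dcoef /=; ring.
rewrite /Aent /vent /= ?E1 ?E2 (_ : (p == 0%N) = false); last lia.
rewrite Hpk /= !mul0r add0r addr0.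
have Hm : (k - p < k)%N by lia.
case: r Hr => [|[|//]] _ /=.
  by rewrite acoef0 // addn0 natrM.
by rewrite acoef1 // natrD natrM.
Qed.

End Main.

Theorem mainTheorem7 (C : numClosedFieldType) (alpha beta : C) (k : nat)
  (c : nat -> C) (x : nat -> C) :
  0 < alpha -> 0 < beta -> c k != 0 ->
  x 0%N = 0 ->
  (forall n : nat, (2 <= n)%N ->
     x n = alpha * x (n %/ 2)%N + beta * x (n.+1 %/ 2)%N + gpoly k c n) ->
  [/\ linear_rep (repu C k) (repA alpha beta k c (x 1%N)) (repw k (x 1%N)) (hseq x),
      repv k x 0%N = repw k (x 1%N),
      linrep_with (repu C k) (repA alpha beta k c (x 1%N)) (repv k x) (hseq x)
    & (d0 beta k c (x 1%N) = 0 -> d1 beta k c (x 1%N) = 0 ->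
       linear_rep (drop_last_col (repu C k))
                  (fun r => drop_last_rc (repA alpha beta k c (x 1%N) r))
                  (drop_last_row (repw k (x 1%N))) (hseq x))].
Proof.
move=> _ _ _ x0 Hx.
have RL := @rowlem C alpha beta k c x x0 Hx.
have V0 : repv k x 0%N = repw k (x 1%N).
  apply/matrixP => p j; rewrite !mxE /hseq x0 subr0.
  case: (p == 0%N :> nat) => //.
  case: (ltngtP p k) => H.
  - rewrite expr0n subn_eq0 leqNgt H /=.
    by rewrite (_ : (p == k.+1 :> nat) = false) //; apply/negbTE; rewrite neq_ltn ltnS (ltnW H).
  - have Ep : val p = k.+1 by apply/eqP; rewrite eqn_leq H andbT -ltnS ltn_ord.
    by rewrite Ep !eqxx.
  - by rewrite H subnn expr0.
have REC : rvs_rec (repA alpha beta k c (x 1%N)) (repv k x).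
  move=> r n; apply/matrixP => p j.
  transitivity (vent C k x (2 * n + r) p); first by rewrite mxE.
  rewrite -(RL r n p (ltn_ord r) (ltn_ord p)) big_mkord.
  rewrite [RHS]mxE; apply: eq_bigr => q _; rewrite !mxE //.
have OUT : forall n, hseq x n = (repu C k *m repv k x n) 0 0.
  move=> n; rewrite mxE big_ord_recl !mxE /= mul1r.
  rewrite big1 ?addr0 //; move=> i _.
  by rewrite !mxE /= mul0r.
have LW : linrep_with (repu C k) (repA alpha beta k c (x 1%N)) (repv k x) (hseq x).
  by split.
split => //.
  by exists (repv k x).
move=> D0 D1.
exists (fun n => drop_last_row (repv k x n)); split; first by rewrite V0.
split.
  move=> r n; apply/matrixP => p j.
  rewrite mxE REC mxE big_ord_recr /= mxE.
  rewrite [X in _ + X = _](_ : _ = 0) ?addr0; last first.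
    rewrite !mxE /=.
    have Hp := ltn_ord p.
    case: (p == 0%N :> nat).
      rewrite (_ : (k.+1 <= k)%N = false) ?ltnn //.
      by rewrite /dcoef; case: (r == 0%N :> nat); rewrite ?D0 ?D1 mul0r.
    by rewrite -ltnS Hp ltnn mul0r.
  rewrite [RHS]mxE; apply: eq_bigr => q _; rewrite !mxE //.
move=> n; rewrite OUT !mxE big_ord_recr /= !mxE /= mul0r addr0.
by apply: eq_bigr => q _; rewrite !mxE.
Qed.
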